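(* Fix a constant $p>2$ and a bounded open subset $\Omega\subset\mathbb{R}^2$ with area $|\Omega|$. Then for every integer $k\ge1$ there is a constant $c=c(k,|\Omega|)$ such that $$\|\partial_tu\cdot v\|_{\mathcal{W}^{k,p}}\le c\big(\|\partial_tu\|_{\mathcal{W}^{k,p}}\|v\|_\infty+\|u\|_{\mathcal{C}^k}\|v\|_{\mathcal{W}^{k,p}}\big)$$ for all functions $u,v\in C^\infty(\overline\Omega)$.
   Context: Coordinates on $\mathbb{R}^2$ are $(s,t)$. All norms are over $\Omega$: $\|w\|_{\mathcal{W}^{k,p}}=\big(\int_\Omega\sum_{2\nu+\mu\le2k}|\partial_s^\nu\partial_t^\mu w|^p\big)^{1/p}$ and the parabolic $\mathcal{C}^k$ norm is $\|w\|_{\mathcal{C}^k}=\sum_{2\nu+\mu\le2k}\|\partial_s^\nu\partial_t^\mu w\|_\infty$. *)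

(* Defs.v *)
From HB Require Import structures.
From mathcomp Require Import all_boot all_order all_algebra.
From mathcomp Require Import all_classical all_reals all_analysis.
Set Implicit Arguments. Unset Strict Implicit. Unset Printing Implicit Defensive.
Import Order.TTheory GRing.Theory Num.Theory.
Import numFieldNormedType.Exports.
Local Open Scope classical_set_scope.
Local Open Scope ring_scope.

Section Defs.
Context {R : realType}.

Definition ds (f : R * R -> R) : R * R -> R :=
  fun x => derive1 (fun s => f (s, x.2)) x.1.
Definition dt (f : R * R -> R) : R * R -> R :=
  fun x => derive1 (fun t => f (x.1, t)) x.2.

Definition pd (nu mu : nat) (f : R * R -> R) : R * R -> R :=
  iter nu ds (iter mu dt f).

Definition dword (w : seq bool) (f : R * R -> R) : R * R -> R :=
  foldr (fun b g => if b then ds g else dt g) f w.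

(* f is in C^infty(closure Omega): all iterated partial derivatives exist and
   are continuous in Omega, and each extends continuously to closure Omega. *)
Definition smooth_closure (Om : set (R * R)) (f : R * R -> R) : Prop :=
  forall w : seq bool,
    (forall x, Om x ->
       derivable (fun s => dword w f (s, x.2)) x.1 1 /\
       derivable (fun t => dword w f (x.1, t)) x.2 1 /\
       {for x, continuous (dword w f)}) /\
    exists g : R * R -> R,
      {within closure Om, continuous g} /\ forall x, Om x -> g x = dword w f x.

Definition leb2 := (@lebesgue_measure R \x @lebesgue_measure R)%E.

(* parabolic Sobolev norm W^{k,p}(Omega) *)
Definition wnorm (p : R) (k : nat) (Om : set (R * R)) (w : R * R -> R) : \bar R :=
  ((\int[leb2]_(x in Om)
     (\sum_(nu < k.+1) \sum_(mu < (2 * k).+1 | (2 * nu + mu <= 2 * k)%N)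
        `|pd nu mu w x| `^ p)%:E) `^ p^-1)%E.

(* sup norm over Omega (0 is included so the empty set has norm 0) *)
Definition supnorm (Om : set (R * R)) (w : R * R -> R) : \bar R :=
  ereal_sup ([set 0%E] `|` [set (`|w x|)%:E | x in Om]).

Definition cknorm (k : nat) (Om : set (R * R)) (w : R * R -> R) : \bar R :=
  (\sum_(nu < k.+1) \sum_(mu < (2 * k).+1 | (2 * nu + mu <= 2 * k)%N)
     supnorm Om (pd nu mu w))%E.

End Defs.

(* Main.v *)
Set Warnings "-all".
Require Import Defs.
From HB Require Import structures.
From mathcomp Require Import all_boot all_order all_algebra.
From mathcomp Require Import all_classical all_reals all_analysis.
From mathcomp Require Import zify ring lra.
From mathcomp Require Import measurable_realfun.
Import Order.TTheory GRing.Theory Num.Theory.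
Import numFieldNormedType.Exports.
Local Open Scope classical_set_scope.
Local Open Scope ring_scope.

Set Implicit Arguments. Unset Strict Implicit.
Section S.
Context {R : realType}.

Lemma derivable_sum_mul (I : Type) (s : seq I) (A B : I -> R -> R) (a : R) :
  (forall i, derivable (A i) a 1) -> (forall i, derivable (B i) a 1) ->
  derivable (fun t => \sum_(i <- s) A i t * B i t) a 1.
Proof.
move=> dA dB; elim: s => [|i s IH].
  have -> : (fun t => \sum_(i <- [::]) A i t * B i t) = cst 0.
    by apply/funext => t; rewrite big_nil.
  exact: derivable_cst.
have -> : (fun t => \sum_(j <- i :: s) A j t * B j t) =
   (A i * B i) + (fun t => \sum_(j <- s) A j t * B j t).
  by apply/funext => t; rewrite big_cons.
exact: (derivableD (derivableM (dA i) (dB i)) IH).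
Qed.

Lemma derive1_sum_mul (I : Type) (s : seq I) (A B : I -> R -> R) (a : R) :
  (forall i, derivable (A i) a 1) -> (forall i, derivable (B i) a 1) ->
  derive1 (fun t => \sum_(i <- s) A i t * B i t) a =
  \sum_(i <- s) (derive1 (A i) a * B i a + A i a * derive1 (B i) a).
Proof.
move=> dA dB; elim: s => [|i s IH].
  have -> : (fun t => \sum_(i <- [::]) A i t * B i t) = cst 0.
    by apply/funext => t; rewrite big_nil.
  by rewrite derive1_cst big_nil.
have -> : (fun t => \sum_(j <- i :: s) A j t * B j t) =
   (A i * B i) + (fun t => \sum_(j <- s) A j t * B j t).
  by apply/funext => t; rewrite big_cons.
rewrite big_cons -IH !derive1E deriveD //; last first.
  - exact: derivable_sum_mul.
  - exact: derivableM.
rewrite deriveM // /GRing.scale /=.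
by rewrite (addrC (A i a * _)) (mulrC (B i a)).
Qed.


Definition Dop (b : bool) (f : R * R -> R) := if b then ds f else dt f.
Definition ln (b : bool) (f : R * R -> R) (x : R * R) : R -> R :=
  if b then (fun s => f (s, x.2)) else (fun t => f (x.1, t)).
Definition pt (b : bool) (x : R * R) := if b then x.1 else x.2.

Lemma DopE b f x : Dop b f x = derive1 (ln b f x) (pt b x).
Proof. by case: b. Qed.

Lemma lnE b f x : ln b f x (pt b x) = f x.
Proof. by case: b; case: x. Qed.

Lemma open_line1 (Om : set (R * R)) x : open Om -> Om x -> \forall s \near x.1, Om (s, x.2).
Proof.
move=> oOm Omx.
have : nbhs x Om by exact: open_nbhs_nbhs.
move=> /nbhs_ballP[e e0 sub].
near=> s; apply: sub; split => /=.
  near: s; by apply/nbhs_ballP; exists e.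
exact: ballxx.
Unshelve. all: by end_near. Qed.

Lemma open_line2 (Om : set (R * R)) x : open Om -> Om x -> \forall t \near x.2, Om (x.1, t).
Proof.
move=> oOm Omx.
have : nbhs x Om by exact: open_nbhs_nbhs.
move=> /nbhs_ballP[e e0 sub].
near=> t; apply: sub; split => /=.
  exact: ballxx.
near: t; by apply/nbhs_ballP; exists e.
Unshelve. all: by end_near. Qed.

Lemma Dop_eq (Om : set (R * R)) b f g x : open Om ->
  (forall y, Om y -> f y = g y) -> Om x -> Dop b f x = Dop b g x.
Proof.
move=> oOm fg Omx; rewrite !DopE !derive1E; apply: near_eq_derive.
case: b => /=.
  have := open_line1 oOm Omx; apply: filterS => s; exact: fg.
have := open_line2 oOm Omx; apply: filterS => s; exact: fg.
Qed.

Definition Psm (Om : set (R * R)) f :=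
  forall w x, Om x -> forall b, derivable (ln b (dword w f) x) (pt b x) 1.

Lemma Psm_of_smooth Om f : smooth_closure Om f -> Psm Om f.
Proof.
move=> sf w x Omx b; have [/(_ x Omx) [h1 [h2 _]] _] := sf w.
by case: b; [exact: h1 | exact: h2].
Qed.

Fixpoint masks (n : nat) : seq bitseq :=
  if n is n'.+1 then map (cons true) (masks n') ++ map (cons false) (masks n')
  else [:: [::]].

Lemma leibniz Om f g : open Om -> Psm Om f -> Psm Om g ->
  forall w x, Om x -> dword w (fun y => f y * g y) x =
  \sum_(m <- masks (size w)) dword (mask m w) f x * dword (mask (map negb m) w) g x.
Proof.
move=> oOm Pf Pg; elim=> [|a w IH] x Omx.
  by rewrite /= big_seq1.
have -> : dword (a :: w) (fun y => f y * g y) x =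
  Dop a (dword w (fun y => f y * g y)) x by [].
rewrite (Dop_eq a oOm IH Omx) DopE.
have -> : ln a (fun y => \sum_(m <- masks (size w))
      dword (mask m w) f y * dword (mask (map negb m) w) g y) x =
    (fun t => \sum_(m <- masks (size w))
      ln a (dword (mask m w) f) x t * ln a (dword (mask (map negb m) w) g) x t).
  by case: a.
rewrite (derive1_sum_mul (masks (size w))); last 2 first.
- by move=> m; exact: Pf.
- by move=> m; exact: Pg.
rewrite /= big_cat !big_map /= big_split /=.
by congr (_ + _); apply: eq_bigr => m _; rewrite -DopE !lnE.
Qed.

End S.

Lemma size_masks n : size (masks n) = (2 ^ n)%N.
Proof. by elim: n => //= n IH; rewrite size_cat !size_map IH expnS mul2n addnn. Qed.

Lemma masks_size n m : m \in masks n -> size m = n.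
Proof.
elim: n m => [|n IH] m /=; first by rewrite inE => /eqP ->.
by rewrite mem_cat => /orP[] /mapP[m' /IH <- ->].
Qed.

Lemma mask_nseq_cnt (T : Type) (x : T) m :
  mask m (nseq (size m) x) = nseq (count id m) x /\
  mask (map negb m) (nseq (size m) x) = nseq (size m - count id m) x.
Proof.
elim: m => [|b m [IH1 IH2]] //=; case: b => /=; rewrite ?IH1 ?IH2 //.
rewrite add0n subSn ?count_size //.
Qed.

Section S.
Context {R : realType}.

Lemma iter_foldr (b : bool) n (f : R * R -> R) :
  foldr (fun b g => if b then ds g else dt g) f (nseq n b) =
  iter n (if b then ds else dt) f.
Proof. by elim: n => //= n ->; case: b. Qed.

Lemma pd_dword nu mu (f : R * R -> R) :
  pd nu mu f = dword (nseq nu true ++ nseq mu false) f.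
Proof. by rewrite /dword foldr_cat !iter_foldr. Qed.

Lemma pd_dt a b (u : R * R -> R) : pd a b (pd 0 1 u) = pd a b.+1 u.
Proof. by rewrite /pd [in RHS]iterSr. Qed.

Lemma mask_w nu mu (m : bitseq) : size m = (nu + mu)%N ->
  exists a b, [/\ (a <= nu)%N, (b <= mu)%N,
    mask m (nseq nu true ++ nseq mu false) = nseq a true ++ nseq b false &
    mask (map negb m) (nseq nu true ++ nseq mu false) =
      nseq (nu - a) true ++ nseq (mu - b) false].
Proof.
move=> sm; rewrite -(cat_take_drop nu m) map_cat.
have s1 : size (take nu m) = nu by rewrite size_takel // sm leq_addr.
have s2 : size (drop nu m) = mu by rewrite size_drop sm addKn.
exists (count id (take nu m)), (count id (drop nu m)).
have := mask_nseq_cnt true (take nu m); rewrite s1 => -[A1 A2].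
have := mask_nseq_cnt false (drop nu m); rewrite s2 => -[B1 B2].
split.
- by rewrite -{2}s1 count_size.
- by rewrite -s2 count_size.
- by rewrite mask_cat ?A1 ?B1 // s1 size_nseq.
- by rewrite mask_cat ?A2 ?B2 // size_map s1 size_nseq.
Qed.

End S.

Section P.
Context {R : realType}.

Definition Sx (p : R) (k : nat) (f : R * R -> R) (x : R * R) : R :=
  \sum_(nu < k.+1) \sum_(mu < (2 * k).+1 | (2 * nu + mu <= 2 * k)%N)
     `|pd nu mu f x| `^ p.

Lemma Sx_ge0 p k f x : 0 <= Sx p k f x.
Proof. by apply: sumr_ge0 => i _; apply: sumr_ge0 => j _; exact: powR_ge0. Qed.

Lemma Sx_term p k f x nu mu : (2 * nu + mu <= 2 * k)%N ->
  `|pd nu mu f x| `^ p <= Sx p k f x.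
Proof.
move=> h.
have hnu : (nu < k.+1)%N by rewrite ltnS -(leq_pmul2l (isT : (0 < 2)%N)); apply: leq_trans h; exact: leq_addr.
have hmu : (mu < (2 * k).+1)%N by rewrite ltnS; apply: leq_trans h; exact: leq_addl.
rewrite /Sx (bigD1 (Ordinal hnu)) //= (bigD1 (Ordinal hmu)) //=.
rewrite -addrA lerDl; apply: addr_ge0; apply: sumr_ge0 => i _.
  exact: powR_ge0.
by apply: sumr_ge0 => j _; exact: powR_ge0.
Qed.

Lemma sum_le_size (I : eqType) (s : seq I) (F : I -> R) c :
  (forall i, i \in s -> F i <= c) -> \sum_(i <- s) F i <= (size s)%:R * c.
Proof.
elim: s => [|i s IH] h; first by rewrite big_nil mul0r.
rewrite big_cons /= -add1n natrD mulrDl mul1r; apply: lerD.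
  by apply: h; rewrite mem_head.
by apply: IH => j js; apply: h; rewrite inE js orbT.
Qed.

Lemma powR_inv_le (p t Q : R) : 0 < p -> 0 <= t -> 0 <= Q ->
  t `^ p <= Q -> t <= Q `^ p^-1.
Proof.
move=> p0 t0 Q0 h.
have -> : t = (t `^ p) `^ p^-1 by rewrite -powRrM mulfV ?gt_eqF // powRr1.
apply: ge0_ler_powR => //; rewrite ?invr_ge0 ?ltW // nnegrE //; exact: powR_ge0.
Qed.

Definition Kc (p : R) (k : nat) : R :=
  (k.+1 * (2 * k).+1)%:R * ((2 ^ (3 * k))%:R `^ p).

Lemma Kc_ge0 p k : 0 <= Kc p k.
Proof. by apply: mulr_ge0 => //; exact: powR_ge0. Qed.

Lemma pw_bound (Om : set (R * R)) (p : R) (k : nat) (u v : R * R -> R)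
    (V M : R) x : 0 < p -> open Om -> Psm Om (pd 0 1 u) -> Psm Om v -> Om x ->
  0 <= V -> 0 <= M -> `|v x| <= V ->
  (forall a b, (2 * a + b <= 2 * k)%N -> `|pd a b u x| <= M) ->
  Sx p k (fun y => pd 0 1 u y * v y) x <=
  Kc p k * (V `^ p * Sx p k (pd 0 1 u) x + M `^ p * Sx p k v x).
Proof.
move=> p0 oOm Pf Pg Omx V0 M0 hV hM.
set f := pd 0 1 u.
set Q := V `^ p * Sx p k f x + M `^ p * Sx p k v x.
have Q0 : 0 <= Q.
  by apply: addr_ge0; apply: mulr_ge0; rewrite ?powR_ge0 ?Sx_ge0.
have pos2 : forall (A B : R), 0 <= A -> 0 <= B -> (A * B) `^ p = A `^ p * B `^ p.
  by move=> A B A0 B0; rewrite powRM.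
have monp : forall (A B : R), 0 <= A -> A <= B -> A `^ p <= B `^ p.
  move=> A B A0 AB; apply: ge0_ler_powR => //; rewrite ?ltW // nnegrE //.
  exact: le_trans AB.
have hterm : forall nu mu m, (2 * nu + mu <= 2 * k)%N -> m \in masks (nu + mu) ->
    `|dword (mask m (nseq nu true ++ nseq mu false)) f x| *
    `|dword (mask (map negb m) (nseq nu true ++ nseq mu false)) v x| <= Q `^ p^-1.
  move=> nu mu m hk /masks_size sm.
  have [a [b [anu bmu -> ->]]] := mask_w sm.
  rewrite -!pd_dword.
  apply: powR_inv_le; rewrite ?mulr_ge0 //.
  rewrite pos2 //.
  have [/andP[/eqP ea /eqP eb]|neq] := boolP ((a == nu) && (b == mu)).
    rewrite ea eb !subnn.
    apply: (@le_trans _ _ (Sx p k f x * V `^ p)).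
      apply: ler_pM; rewrite ?powR_ge0 //.
        exact: Sx_term.
      exact: monp.
    by rewrite mulrC /Q lerDl; apply: mulr_ge0; rewrite ?powR_ge0 ?Sx_ge0.
  have hab : (2 * a + b.+1 <= 2 * k)%N.
    move: neq; rewrite negb_and => /orP[] /eqP hne; lia.
  apply: (@le_trans _ _ (M `^ p * Sx p k v x)); last first.
    by rewrite /Q lerDr; apply: mulr_ge0; rewrite ?powR_ge0 ?Sx_ge0.
  apply: ler_pM; rewrite ?powR_ge0 //.
    apply: monp => //; rewrite /f pd_dt; exact: hM.
  apply: Sx_term.
  lia.
have hder : forall nu mu, (2 * nu + mu <= 2 * k)%N ->
    `|pd nu mu (fun y => f y * v y) x| `^ p <= (2 ^ (3 * k))%:R `^ p * Q.
  move=> nu mu hk.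
  rewrite pd_dword (leibniz oOm Pf Pg _ Omx) size_cat !size_nseq.
  have h1 : `|\sum_(m <- masks (nu + mu))
       dword (mask m (nseq nu true ++ nseq mu false)) f x *
       dword (mask [seq ~~ i | i <- m] (nseq nu true ++ nseq mu false)) v x|
     <= (2 ^ (nu + mu))%:R * Q `^ p^-1.
    apply: le_trans (ler_norm_sum _ _ _) _.
    rewrite -size_masks; apply: sum_le_size => m hm.
    by rewrite normrM; apply: hterm.
  apply: le_trans (monp _ _ (normr_ge0 _) h1) _.
  rewrite pos2 ?powR_ge0 // -powRrM mulVf ?gt_eqF // powRr1 //.
  apply: ler_wpM2r => //.
  apply: monp => //; rewrite ler_nat leq_pexp2l //.
  lia.
rewrite /Sx /Kc.
apply: (@le_trans _ _ (\sum_(nu < k.+1) \sum_(mu < (2 * k).+1)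
   ((2 ^ (3 * k))%:R `^ p * Q))).
  apply: ler_sum => nu _; rewrite big_mkcond /=; apply: ler_sum => mu _.
  case: ifP => hk; first exact: hder.
  by apply: mulr_ge0; rewrite ?powR_ge0.
rewrite !sumr_const !card_ord.
by rewrite -mulrnA -[X in X <= _]mulr_natl mulrA mulnC.
Qed.

End P.

Section A.
Context {R : realType}.

Definition box (q : (rat * rat) * (rat * rat)) : set (R * R) :=
  [set` `]ratr q.1.1, ratr q.1.2[] `*` [set` `]ratr q.2.1, ratr q.2.2[].

Lemma open_meas (A : set (R * R)) : open A -> measurable A.
Proof.
move=> oA.
pose F (n : nat) : set (R * R) := if unpickle n is Some q then
  (if `[< box q `<=` A >] then box q else set0) else set0.
have -> : A = \bigcup_n F n.
  apply/seteqP; split; last first.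
    move=> x [n _]; rewrite /F; case: (unpickle n) => // q.
    by case: asboolP => // sub /sub.
  move=> x Ax.
  have : nbhs x A by exact: open_nbhs_nbhs.
  move=> /nbhs_ballP[e e0 sub]; have {}e0 : 0 < e := e0.
  have [q1] : exists q : rat, ratr q \in `]x.1 - e, x.1[.
    by apply: rat_in_itvoo; rewrite ?ltrBlDr ltrDl.
  rewrite in_itv /= => /andP[q1a q1b].
  have [q2] : exists q : rat, ratr q \in `]x.1, x.1 + e[.
    by apply: rat_in_itvoo; rewrite ?ltrBlDr ltrDl.
  rewrite in_itv /= => /andP[q2a q2b].
  have [q3] : exists q : rat, ratr q \in `]x.2 - e, x.2[.
    by apply: rat_in_itvoo; rewrite ?ltrBlDr ltrDl.
  rewrite in_itv /= => /andP[q3a q3b].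
  have [q4] : exists q : rat, ratr q \in `]x.2, x.2 + e[.
    by apply: rat_in_itvoo; rewrite ?ltrBlDr ltrDl.
  rewrite in_itv /= => /andP[q4a q4b].
  set q := ((q1, q2), (q3, q4)).
  have bsub : box q `<=` A.
    move=> y [/= y1 y2]; move: y1 y2; rewrite !in_itv /= => /andP[y1a y1b] /andP[y2a y2b].
    have h1 : x.1 - e < y.1 := lt_trans q1a y1a.
    have h2 : y.1 < x.1 + e := lt_trans y1b q2b.
    have h3 : x.2 - e < y.2 := lt_trans q3a y2a.
    have h4 : y.2 < x.2 + e := lt_trans y2b q4b.
    apply: sub; split => /=; rewrite /ball /= ltr_norml.
      move: h1 h2; clear; move=> h1 h2; apply/andP; split; lra.
    move: h3 h4; clear; move=> h1 h2; apply/andP; split; lra.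
  exists (pickle q); first by [].
  rewrite /F pickleK.
  case: asboolP => [_|//].
  split; apply/andP; split; [exact: q1b|exact: q2a|exact: q3b|exact: q4a].
apply: bigcupT_measurable => n; rewrite /F.
case: (unpickle n) => // q; case: asboolP => // _.
apply: measurableX; exact: measurable_itv.
Qed.


Lemma cont_meas (Om : set (R * R)) (h : R * R -> R) : open Om ->
  (forall x, Om x -> {for x, continuous h}) -> measurable_fun Om h.
Proof.
move=> oOm ch; apply: (measurability _ (measurable_realfun.RGenOpens.measurableE R)).
move=> _ [_ [a [b ->] <-]]; apply: open_meas.
rewrite openE => y [Omy hy].
apply: filterI; first exact: open_nbhs_nbhs.
apply: (ch y Omy); apply: open_nbhs_nbhs; split => //; exact: interval_open.
Qed.

End A.

Section B.
Context {R : realType}.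

Lemma closure_bounded_compact (Om : set (R * R)) :
  bounded_set Om -> compact (closure Om).
Proof.
move=> [M0 [_ hM]]; have ltrDl1 : M0 < M0 + 1 by rewrite ltrDl.
have {hM} hM := hM (M0 + 1) ltrDl1.
set M := M0 + 1 in hM.
have cl : closed [set x : R * R | `|x| <= M].
  rewrite (_ : [set x : R * R | `|x| <= M] = (@Num.norm _ (R * R)%type) @^-1` [set r | r <= M]) //.
  apply: closed_comp; last exact: closed_le.
  by move=> x _; exact: norm_continuous.
apply: (@subclosed_compact _ _ (`[- M, M] `*` `[- M, M])).
- exact: closed_closure.
- by apply: compact_setX; exact: segment_compact.
- move=> x /(closure_subset hM); rewrite -(closure_id _).1 // => /=.
  rewrite prod_normE ge_max => /andP[h1 h2].
  by split; rewrite /= in_itv /= -ler_norml.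
Qed.

Lemma bound_of (Om : set (R * R)) (g : R * R -> R) :
  bounded_set Om -> {within closure Om, continuous g} ->
  exists B, 0 <= B /\ forall x, Om x -> `|g x| <= B.
Proof.
move=> bOm cg.
have := compact_bounded (continuous_compact cg (closure_bounded_compact bOm)).
move=> [M0 [_ hM]]; have ltrDl1 : M0 < M0 + 1 by rewrite ltrDl.
have lt1 : M0 < Num.max M0 0 + 1 by rewrite ltr_pwDr // le_max lexx.
have {hM} hM := hM (Num.max M0 0 + 1) lt1.
exists (Num.max M0 0 + 1); split.
  by apply: addr_ge0 => //; rewrite le_max lexx orbT.
move=> x Omx; apply: hM; exists x => //; exact: subset_closure.
Qed.

End B.


Section F.
Context {R : realType}.
Local Open Scope ereal_scope.

Lemma supnorm_ge0 (Om : set (R * R)) w : 0 <= supnorm Om w.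
Proof. by apply: ereal_sup_ubound; left. Qed.

Lemma supnorm_ub (Om : set (R * R)) w x : Om x -> (`|w x|)%:E <= supnorm Om w.
Proof. by move=> Omx; apply: ereal_sup_ubound; right; exists x. Qed.

Lemma supnorm_le (Om : set (R * R)) w (B : R) : (0 <= B)%R ->
  (forall x, Om x -> (`|w x| <= B)%R) -> supnorm Om w <= B%:E.
Proof.
move=> B0 hB; apply: ge_ereal_sup => _ [->|[x Omx <-]]; rewrite lee_fin //.
exact: hB.
Qed.

Lemma supnorm_fin (Om : set (R * R)) w (B : R) : (0 <= B)%R ->
  (forall x, Om x -> (`|w x| <= B)%R) -> supnorm Om w \is a fin_num.
Proof.
move=> B0 hB; rewrite ge0_fin_numE ?supnorm_ge0 //.
by apply: le_lt_trans (supnorm_le B0 hB) _; exact: ltry.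
Qed.

Lemma supnorm_ub_fine (Om : set (R * R)) w x : supnorm Om w \is a fin_num ->
  Om x -> (`|w x| <= fine (supnorm Om w))%R.
Proof. by move=> fw Omx; rewrite -lee_fin fineK //; exact: supnorm_ub. Qed.

Lemma int_mono (Om : set (R * R)) (f g : R * R -> \bar R) :
  (forall x, Om x -> 0 <= f x) -> (forall x, Om x -> f x <= g x) ->
  \int[leb2]_(x in Om) f x <= \int[leb2]_(x in Om) g x.
Proof.
move=> f0 fg.
have g0 : forall x, Om x -> 0 <= g x by move=> x Omx; exact: le_trans (f0 x Omx) (fg x Omx).
rewrite !ge0_integralE //.
apply: ereal_sup_le => _ [h hf <-]; exists h => // x; apply: le_trans (hf x) _.
rewrite /patch; case: ifP => // /set_mem Omx; exact: fg.
Qed.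

End F.

Section G.
Context {R : realType}.

Lemma powR_add_le (s t r : R) : 0 <= s -> 0 <= t -> 0 <= r ->
  (s + t) `^ r <= 2 `^ r * (s `^ r + t `^ r).
Proof.
wlog st : s t / s <= t.
  move=> h s0 t0 r0; have [|ts] := leP s t; first by move=> st; exact: h.
  by rewrite addrC [_ `^ r + _]addrC; apply: h => //; exact: ltW.
move=> s0 t0 r0.
apply: (@le_trans _ _ ((2 * t) `^ r)).
  apply: ge0_ler_powR => //; rewrite ?nnegrE ?addr_ge0 ?mulr_ge0 //.
  by rewrite mulr2n mulrDl mul1r lerD2r.
rewrite powRM // ler_wpM2l ?powR_ge0 // lerDr; exact: powR_ge0.
Qed.

Local Open Scope ereal_scope.

Lemma powe_add_le (a b : \bar R) (r : R) : 0 <= a -> 0 <= b -> (0 < r)%R ->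
  (a + b) `^ r <= (2 `^ r)%:E * (a `^ r + b `^ r).
Proof.
move=> a0 b0 r0.
have h2 : (0 < 2 `^ r)%R by rewrite powR_gt0.
case: a a0 => [s s0|_|//]; case: b b0 => [t t0|_|//].
- rewrite lee_fin in s0; rewrite lee_fin in t0.
  by rewrite -EFinD !poweR_EFin -EFinD -EFinM lee_fin powR_add_le // ltW.
- by rewrite addey // poweRyr ?gt_eqF // addey ?gt0_muley ?leey // lte_fin.
- by rewrite addye // poweRyr ?gt_eqF // addye ?gt0_muley ?leey // lte_fin.
- by rewrite addye // poweRyr ?gt_eqF // addye ?gt0_muley ?leey // lte_fin.
Qed.

End G.

Section H.
Context {R : realType}.

Lemma term_le (k : nat) (F : nat -> nat -> R) nu mu :
  (forall i j, 0 <= F i j) -> (2 * nu + mu <= 2 * k)%N ->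
  F nu mu <= \sum_(i < k.+1) \sum_(j < (2 * k).+1 | (2 * i + j <= 2 * k)%N) F i j.
Proof.
move=> F0 h.
have hnu : (nu < k.+1)%N by lia.
have hmu : (mu < (2 * k).+1)%N by lia.
rewrite (bigD1 (Ordinal hnu)) //= (bigD1 (Ordinal hmu)) //=.
rewrite -addrA lerDl; apply: addr_ge0; apply: sumr_ge0 => i _ //.
by apply: sumr_ge0 => j _.
Qed.

Lemma Sx_meas (Om : set (R * R)) p k h :
  (forall nu mu, measurable_fun Om (pd nu mu h)) -> measurable_fun Om (Sx p k h).
Proof.
move=> mh; rewrite /Sx; apply: measurable_sum => nu.
under eq_fun do rewrite big_mkcond /=.
apply: measurable_sum => mu; case: (2 * nu + mu <= 2 * k)%N; last exact: measurable_cst.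
apply: (measurableT_comp (measurable_powR _)).
apply: measurableT_comp; [exact: normr_measurable | exact: mh].
Qed.

Lemma wnormE p k (Om : set (R * R)) w :
  wnorm p k Om w = ((\int[leb2]_(x in Om) (Sx p k w x)%:E) `^ p^-1)%E.
Proof. by []. Qed.

End H.

Theorem mainTheorem9 (R : realType) (p : R) (hp : 2 < p) (k : nat)
  (hk : (1 <= k)%N) (A : R) :
  exists c : R, forall Om : set (R * R),
    open Om -> bounded_set Om -> leb2 Om = A%:E ->
    forall u v : R * R -> R, smooth_closure Om u -> smooth_closure Om v ->
    (wnorm p k Om (fun x => (pd 0 1 u x * v x)%R)
     <= c%:E * (wnorm p k Om (pd 0 1 u) * supnorm Om v
                + cknorm k Om u * wnorm p k Om v))%E.
Proof.
have p0 : 0 < p by apply: lt_trans hp.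
have r0 : 0 < p^-1 by rewrite invr_gt0.
exists (2 `^ p^-1 * Kc p k `^ p^-1).
move=> Om oOm bOm _ u v su sv.
have Pu := Psm_of_smooth su.
have Pv := Psm_of_smooth sv.
have Pf : Psm Om (pd 0 1 u).
  move=> w x Omx b.
  have -> : dword w (pd 0 1 u) = dword (w ++ [:: false]) u.
    by rewrite /dword foldr_cat /pd /=.
  exact: Pu.
have finsup : forall w h, smooth_closure Om h -> supnorm Om (dword w h) \is a fin_num.
  move=> w h sh; have [_ [g [cg eg]]] := sh w.
  have [B [B0 hB]] := bound_of bOm cg.
  by apply: (supnorm_fin B0) => x Omx; rewrite -eg //; exact: hB.
have mpd : forall w h, smooth_closure Om h -> measurable_fun Om (dword w h).
  move=> w h sh; apply: cont_meas oOm _ => x Omx.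
  by have [/(_ x Omx) [_ [_ ?]] _] := sh w.
have finv : supnorm Om v \is a fin_num := finsup [::] v sv.
set V := fine (supnorm Om v).
have V0 : 0 <= V by apply: fine_ge0; exact: supnorm_ge0.
have hV : forall x, Om x -> `|v x| <= V := fun x Omx => supnorm_ub_fine finv Omx.
set M := \sum_(nu < k.+1) \sum_(mu < (2 * k).+1 | (2 * nu + mu <= 2 * k)%N)
   fine (supnorm Om (pd nu mu u)).
have finu : forall a b, supnorm Om (pd a b u) \is a fin_num.
  by move=> a b; rewrite pd_dword; exact: finsup.
have hMeq : cknorm k Om u = M%:E.
  rewrite /cknorm /M -sumEFin; apply: eq_bigr => nu _.
  by rewrite -sumEFin; apply: eq_bigr => mu _; rewrite fineK.
have M0 : 0 <= M.
  by apply: sumr_ge0 => i _; apply: sumr_ge0 => j _; apply: fine_ge0; exact: supnorm_ge0.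
have hM : forall x, Om x -> forall a b, (2 * a + b <= 2 * k)%N -> `|pd a b u x| <= M.
  move=> x Omx a b hab; apply: le_trans (supnorm_ub_fine (finu a b) Omx) _.
  apply: (@term_le R k (fun a b => fine (supnorm Om (pd a b u)))) => // i j.
  apply: fine_ge0; exact: supnorm_ge0.
have mSf : measurable_fun Om (Sx p k (pd 0 1 u)).
  apply: Sx_meas => nu mu; rewrite pd_dt pd_dword; exact: mpd.
have mSv : measurable_fun Om (Sx p k v).
  apply: Sx_meas => nu mu; rewrite pd_dword; exact: mpd.
have mOm := open_meas oOm.
rewrite !wnormE hMeq -(fineK finv) -/V.
set If := (\int[leb2]_(x in Om) (Sx p k (pd 0 1 u) x)%:E)%E.
set Iv := (\int[leb2]_(x in Om) (Sx p k v x)%:E)%E.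
set Ifg := (\int[leb2]_(x in Om) (Sx p k (fun x => pd 0 1 u x * v x) x)%:E)%E.
have If0 : (0 <= If)%E by apply: integral_ge0 => x _; rewrite lee_fin Sx_ge0.
have Iv0 : (0 <= Iv)%E by apply: integral_ge0 => x _; rewrite lee_fin Sx_ge0.
have Ifg0 : (0 <= Ifg)%E by apply: integral_ge0 => x _; rewrite lee_fin Sx_ge0.
have KV0 : 0 <= Kc p k * V `^ p by apply: mulr_ge0; rewrite ?Kc_ge0 ?powR_ge0.
have KM0 : 0 <= Kc p k * M `^ p by apply: mulr_ge0; rewrite ?Kc_ge0 ?powR_ge0.
have hI : (Ifg <= (Kc p k * V `^ p)%:E * If + (Kc p k * M `^ p)%:E * Iv)%E.
  apply: (@le_trans _ _ (\int[leb2]_(x in Om)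
     (((Kc p k * V `^ p) * Sx p k (pd 0 1 u) x)%:E +
      ((Kc p k * M `^ p) * Sx p k v x)%:E))%E).
    apply: int_mono.
    - by move=> x _; rewrite lee_fin Sx_ge0.
    - move=> x Omx; rewrite -EFinD lee_fin.
      apply: le_trans (pw_bound p0 oOm Pf Pv Omx V0 M0 (hV x Omx) (hM x Omx)) _.
      by rewrite mulrDr !mulrA.
  rewrite ge0_integralD //; last 4 first.
  - by move=> x _; rewrite lee_fin mulr_ge0 ?Sx_ge0.
  - apply/measurable_EFinP; apply: measurable_funM => //; exact: measurable_cst.
  - by move=> x _; rewrite lee_fin mulr_ge0 ?Sx_ge0.
  - apply/measurable_EFinP; apply: measurable_funM => //; exact: measurable_cst.
  rewrite le_eqVlt; apply/orP; left; apply/eqP.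
  congr (_ + _).
    under eq_integral do rewrite EFinM.
    rewrite ge0_integralZl_EFin //.
    - by move=> x _; rewrite lee_fin Sx_ge0.
    - exact/measurable_EFinP.
  under eq_integral do rewrite EFinM.
  rewrite ge0_integralZl_EFin //.
  - by move=> x _; rewrite lee_fin Sx_ge0.
  - exact/measurable_EFinP.
have KV0e : (0 <= (Kc p k * V `^ p)%:E)%E by rewrite lee_fin.
have KM0e : (0 <= (Kc p k * M `^ p)%:E)%E by rewrite lee_fin.
have S0 : (0 <= (Kc p k * V `^ p)%:E * If + (Kc p k * M `^ p)%:E * Iv)%E.
  exact: (adde_ge0 (mule_ge0 KV0e If0) (mule_ge0 KM0e Iv0)).
set S := ((Kc p k * V `^ p)%:E * If + (Kc p k * M `^ p)%:E * Iv)%E in S0 *.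
have hpow : (Ifg `^ p^-1 <= S `^ p^-1)%E.
  have := @gt0_ler_poweR R p^-1 (ltW r0) Ifg S.
  rewrite !in_itv /= !leey Ifg0 S0 /=.
  by move=> /(_ isT isT hI).
apply: le_trans hpow _; rewrite /S.
apply: le_trans (powe_add_le (mule_ge0 KV0e If0) (mule_ge0 KM0e Iv0) r0) _.
rewrite (poweRM _ KV0e If0) (poweRM _ KM0e Iv0) !poweR_EFin.
have e1 : forall X, 0 <= X -> (Kc p k * X `^ p) `^ p^-1 = Kc p k `^ p^-1 * X.
  move=> X X0.
  by rewrite powRM ?powR_ge0 ?Kc_ge0 // -powRrM mulfV ?gt_eqF // powRr1.
rewrite !e1 // [(2 `^ p^-1 * _)%:E]EFinM -[in X in (_ <= X)%E]muleA.
have h2 : (0 <= (2 `^ p^-1)%:E)%E by rewrite lee_fin powR_ge0.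
apply: lee_wpmul2l; first exact: h2.
have V0e : (0 <= V%:E)%E by rewrite lee_fin.
have M0e : (0 <= M%:E)%E by rewrite lee_fin.
rewrite (ge0_muleDr _ (mule_ge0 (poweR_ge0 _ _) V0e) (mule_ge0 M0e (poweR_ge0 _ _))).
rewrite !EFinM [(If `^ p^-1 * _)%E]muleC !muleA.
exact: lexx.
Qed.
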